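(* The category $\mathsf{Ab}(\mathsf{PreOrdGrp})$ of internal abelian groups in $\mathsf{PreOrdGrp}$ is isomorphic to the category $\mathsf{Mono}(\mathsf{Ab})$ of monomorphisms in the category $\mathsf{Ab}$ of abelian groups (objects: injective homomorphisms of abelian groups; morphisms: commutative squares).
   Context: A preordered group is a pair $(G,P_G)$ with $G$ an additively written group and $P_G\subseteq G$ a submonoid closed under conjugation; morphisms $(G,P_G)\to(H,P_H)$ are group homomorphisms $f$ with $f(P_G)\subseteq P_H$. This is the category $\mathsf{PreOrdGrp}$ (finite products are $(G\times H,P_G\times P_H)$). $\mathsf{Ab}(\mathsf{PreOrdGrp})$ is the category of internal abelian group objects in $\mathsf{PreOrdGrp}$ with internal homomorphisms. *)

(* Defs.v *)
From mathcomp Require Import all_boot all_algebra.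
Set Implicit Arguments. Unset Strict Implicit. Unset Printing Implicit Defensive.
Import GRing.Theory.
Local Open Scope ring_scope.

Record catData := CatData {
  Ob : Type;
  Hom : Ob -> Ob -> Type;
  cid : forall x, Hom x x;
  ccomp : forall x y z, Hom y z -> Hom x y -> Hom x z }.
Arguments cid {c} x.
Arguments ccomp {c x y z} _ _.

Record functor (C D : catData) := Functor {
  fobj : Ob C -> Ob D;
  fmap : forall a b, Hom a b -> Hom (fobj a) (fobj b);
  fmap_id : forall a, fmap (cid a) = cid (fobj a);
  fmap_comp : forall a b c (g : Hom b c) (f : Hom a b),
      fmap (ccomp g f) = ccomp (fmap g) (fmap f) }.
Arguments fmap {C D} _ {a b} _.

Definition cat_iso (C : catData) (a b : Ob C) : Prop :=
  exists (f : Hom a b) (g : Hom b a), ccomp g f = cid a /\ ccomp f g = cid b.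

Definition cat_equivalent (C D : catData) : Prop :=
  exists F : functor C D,
    (forall a b, bijective (@fmap C D F a b)) /\
    (forall d, exists c, cat_iso (fobj F c) d).

(* A (not necessarily abelian) additively written group G together with
   P_G ⊆ G a submonoid closed under conjugation. *)
Record preOrdGrp := PreOrdGrp {
  pog_car : Type;
  pog_add : pog_car -> pog_car -> pog_car;
  pog_zero : pog_car;
  pog_opp : pog_car -> pog_car;
  pog_addA : forall x y z, pog_add x (pog_add y z) = pog_add (pog_add x y) z;
  pog_add0l : forall x, pog_add pog_zero x = x;
  pog_add0r : forall x, pog_add x pog_zero = x;
  pog_addNl : forall x, pog_add (pog_opp x) x = pog_zero;
  pog_addNr : forall x, pog_add x (pog_opp x) = pog_zero;
  pog_pos : pog_car -> Prop;
  pog_pos0 : pog_pos pog_zero;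
  pog_posD : forall x y, pog_pos x -> pog_pos y -> pog_pos (pog_add x y);
  pog_posJ : forall g x, pog_pos x ->
      pog_pos (pog_add (pog_add g x) (pog_opp g)) }.

Arguments pog_add : clear implicits.
Arguments pog_zero : clear implicits.
Arguments pog_opp : clear implicits.
Arguments pog_pos : clear implicits.

Record pog_hom (G H : preOrdGrp) := PogHom {
  pog_fun :> pog_car G -> pog_car H;
  pog_funD : forall x y, pog_fun (pog_add G x y) = pog_add H (pog_fun x) (pog_fun y);
  pog_funP : forall x, pog_pos G x -> pog_pos H (pog_fun x) }.

Definition pog_prod (G H : preOrdGrp) : preOrdGrp.
Proof.
refine (@PreOrdGrp (pog_car G * pog_car H)
  (fun x y => (pog_add G x.1 y.1, pog_add H x.2 y.2))
  (pog_zero G, pog_zero H)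
  (fun x => (pog_opp G x.1, pog_opp H x.2))
  _ _ _ _ _
  (fun x => pog_pos G x.1 /\ pog_pos H x.2) _ _ _).
- by move=> [? ?] [? ?] [? ?] /=; rewrite !pog_addA.
- by move=> [? ?] /=; rewrite !pog_add0l.
- by move=> [? ?] /=; rewrite !pog_add0r.
- by move=> [? ?] /=; rewrite !pog_addNl.
- by move=> [? ?] /=; rewrite !pog_addNr.
- by split; apply: pog_pos0.
- by move=> [? ?] [? ?] [? ?] [? ?]; split; apply: pog_posD.
- by move=> [? ?] [? ?] [? ?]; split; apply: pog_posJ.
Defined.

Definition pog_unit : preOrdGrp.
Proof.
refine (@PreOrdGrp unit (fun _ _ => tt) tt (fun _ => tt) _ _ _ _ _
  (fun _ => True) _ _ _); by repeat case.
Defined.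

Record abPOG := AbPOG {
  ab_obj : preOrdGrp;
  ab_m : pog_hom (pog_prod ab_obj ab_obj) ab_obj;
  ab_e : pog_hom pog_unit ab_obj;
  ab_i : pog_hom ab_obj ab_obj;
  ab_mA : forall x y z : pog_car ab_obj,
      ab_m (ab_m (x, y), z) = ab_m (x, ab_m (y, z));
  ab_m0l : forall x : pog_car ab_obj, ab_m (ab_e tt, x) = x;
  ab_mNl : forall x : pog_car ab_obj, ab_m (ab_i x, x) = ab_e tt;
  ab_mC : forall x y : pog_car ab_obj, ab_m (x, y) = ab_m (y, x) }.

Record abHom (X Y : abPOG) := AbHom {
  ah_hom :> pog_hom (ab_obj X) (ab_obj Y);
  ah_m : forall x y, ah_hom (ab_m X (x, y)) = ab_m Y (ah_hom x, ah_hom y) }.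

Definition abHom_id (X : abPOG) : abHom X X.
Proof.
by refine (@AbHom X X (@PogHom _ _ (fun x => x) (fun _ _ => erefl) (fun _ h => h)) (fun _ _ => erefl)).
Defined.

Definition pog_hom_comp (G H K : preOrdGrp) (g : pog_hom H K) (f : pog_hom G H) :
  pog_hom G K.
Proof.
refine (@PogHom G K (fun x => g (f x)) _ _).
- by move=> x y; rewrite !pog_funD.
- by move=> x Px; do 2 apply: pog_funP.
Defined.

Definition abHom_comp (X Y Z : abPOG) (g : abHom Y Z) (f : abHom X Y) : abHom X Z.
Proof.
refine (@AbHom X Z (pog_hom_comp g f) _).
by move=> x y /=; rewrite !ah_m.
Defined.

Definition AbPreOrdGrp : catData :=
  @CatData abPOG abHom abHom_id abHom_comp.

Record monoAb := MonoAb {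
  ma_dom : zmodType;
  ma_cod : zmodType;
  ma_fun : ma_dom -> ma_cod;
  ma_funD : forall x y, ma_fun (x + y) = ma_fun x + ma_fun y;
  ma_inj : injective ma_fun }.

Arguments ma_fun : clear implicits.

Record monoHom (f g : monoAb) := MonoHom {
  mh_top : ma_dom f -> ma_dom g;
  mh_bot : ma_cod f -> ma_cod g;
  mh_topD : forall x y, mh_top (x + y) = mh_top x + mh_top y;
  mh_botD : forall x y, mh_bot (x + y) = mh_bot x + mh_bot y;
  mh_sq : forall x, mh_bot (ma_fun f x) = ma_fun g (mh_top x) }.

Definition monoHom_id (f : monoAb) : monoHom f f :=
  @MonoHom f f (fun x => x) (fun x => x)
    (fun _ _ => erefl) (fun _ _ => erefl) (fun _ => erefl).

Definition monoHom_comp (f g h : monoAb) (q : monoHom g h) (p : monoHom f g) :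
  monoHom f h.
Proof.
refine (@MonoHom f h (fun x => mh_top q (mh_top p x))
                     (fun x => mh_bot q (mh_bot p x)) _ _ _).
- by move=> x y; rewrite !mh_topD.
- by move=> x y; rewrite !mh_botD.
- by move=> x; rewrite !mh_sq.
Defined.

Definition MonoAbCat : catData :=
  @CatData monoAb monoHom monoHom_id monoHom_comp.

(* Main.v *)
Require Import Defs.
From mathcomp Require Import all_boot all_algebra.
From HB Require Import structures.
From mathcomp Require boolp.
Set Implicit Arguments. Unset Strict Implicit. Unset Printing Implicit Defensive.
Import GRing.Theory.
Local Open Scope ring_scope.

Lemma sig_eq (T : Type) (P : T -> Prop) (x y : {t | P t}) : sval x = sval y -> x = y.
Proof. case: x y => a pa [b pb] /= E; subst; f_equal; exact: boolp.Prop_irrelevance. Qed.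

Section AbObj.
Variable X : abPOG.
Definition carG := pog_car (ab_obj X).
Definition carP := {x : carG | pog_pos (ab_obj X) x}.
End AbObj.

HB.instance Definition _ X := boolp.gen_eqMixin (carG X).
HB.instance Definition _ X := boolp.gen_choiceMixin (carG X).
HB.instance Definition _ X := boolp.gen_eqMixin (carP X).
HB.instance Definition _ X := boolp.gen_choiceMixin (carP X).

Section AbObj2.
Variable X : abPOG.
Let G := ab_obj X.
Definition gadd (x y : carG X) : carG X := ab_m X (x, y).
Definition gzero : carG X := ab_e X tt.
Definition gopp (x : carG X) : carG X := ab_i X x.

Lemma gaddA : associative gadd.
Proof. by move=> x y z; rewrite /gadd ab_mA. Qed.
Lemma gaddC : commutative gadd.
Proof. by move=> x y; rewrite /gadd ab_mC. Qed.
Lemma gadd0 : left_id gzero gadd.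
Proof. by move=> x; rewrite /gadd ab_m0l. Qed.
Lemma gaddN : left_inverse gzero gopp gadd.
Proof. by move=> x; rewrite /gadd ab_mNl. Qed.

Lemma posm (x y : carG X) : pog_pos G x -> pog_pos G y -> pog_pos G (gadd x y).
Proof. by move=> px py; exact (@pog_funP _ _ (ab_m X) (x, y) (conj px py)). Qed.
Lemma pose : pog_pos G gzero.
Proof. exact (@pog_funP _ _ (ab_e X) tt I). Qed.
Lemma posi (x : carG X) : pog_pos G x -> pog_pos G (gopp x).
Proof. exact: pog_funP. Qed.

Definition padd (x y : carP X) : carP X := exist _ _ (posm (svalP x) (svalP y)).
Definition pzero : carP X := exist _ _ pose.
Definition popp (x : carP X) : carP X := exist _ _ (posi (svalP x)).

Lemma paddA : associative padd.
Proof. by move=> x y z; apply: sig_eq; rewrite /= gaddA. Qed.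
Lemma paddC : commutative padd.
Proof. by move=> x y; apply: sig_eq; rewrite /= gaddC. Qed.
Lemma padd0 : left_id pzero padd.
Proof. by move=> x; apply: sig_eq; rewrite /= gadd0. Qed.
Lemma paddN : left_inverse pzero popp padd.
Proof. by move=> x; apply: sig_eq; rewrite /= gaddN. Qed.

(* Eckmann-Hilton *)
Lemma e_zero : ab_e X tt = pog_zero G.
Proof.
have H := pog_funD (ab_e X) tt tt.
have : pog_add G (pog_opp G (ab_e X tt)) (ab_e X tt) =
       pog_add G (pog_opp G (ab_e X tt)) (pog_add G (ab_e X tt) (ab_e X tt)).
  by rewrite -H.
by rewrite pog_addA pog_addNl pog_add0l.
Qed.

Lemma m_add (x y : carG X) : ab_m X (x, y) = pog_add G x y.
Proof.
have H := pog_funD (ab_m X) (x, pog_zero G) (pog_zero G, y).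
rewrite /= pog_add0r pog_add0l in H.
rewrite H -e_zero ab_m0l ab_mC ab_m0l //.
Qed.
End AbObj2.

HB.instance Definition _ X := GRing.isZmodule.Build (carG X)
  (@gaddA X) (@gaddC X) (@gadd0 X) (@gaddN X).
HB.instance Definition _ X := GRing.isZmodule.Build (carP X)
  (@paddA X) (@paddC X) (@padd0 X) (@paddN X).

Lemma monoHom_eq (f g : monoAb) (p q : monoHom f g) :
  mh_top p =1 mh_top q -> mh_bot p =1 mh_bot q -> p = q.
Proof.
case: p q => t1 b1 ? ? ? [t2 b2 ? ? ?] /= Ht Hb.
move: (boolp.funext Ht) (boolp.funext Hb) => ? ?; subst.
by f_equal; apply: boolp.Prop_irrelevance.
Qed.

Lemma abHom_eq (X Y : abPOG) (p q : abHom X Y) :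
  (forall x, p x = q x) -> p = q.
Proof.
case: p q => [[h1 d1 p1] m1] [[h2 d2 p2] m2] /= H.
move: (boolp.funext H) => E; subst h2.
have -> : d2 = d1 by apply: boolp.Prop_irrelevance.
have -> : p2 = p1 by apply: boolp.Prop_irrelevance.
have -> : m2 = m1 by apply: boolp.Prop_irrelevance.
done.
Qed.

Definition Fobj (X : abPOG) : monoAb.
Proof.
refine (@MonoAb (carP X) (carG X) (fun x => sval x) (fun _ _ => erefl) _).
by move=> x y; apply: sig_eq.
Defined.

Definition Fmap (X Y : abPOG) (h : abHom X Y) : monoHom (Fobj X) (Fobj Y).
Proof.
refine (@MonoHom (Fobj X) (Fobj Y)
  (fun x => exist _ (h (sval x)) (pog_funP h (svalP x))) (fun x => h x) _ _ _).
- by move=> x y; apply: sig_eq => /=; rewrite /gadd ah_m.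
- by move=> x y; rewrite /= /gadd ah_m.
- by [].
Defined.

Definition F : functor AbPreOrdGrp MonoAbCat.
Proof.
refine (@Functor AbPreOrdGrp MonoAbCat Fobj Fmap _ _).
- by move=> a; apply: monoHom_eq => x //=; apply: sig_eq.
- by move=> a b c g f; apply: monoHom_eq => x //=; apply: sig_eq.
Defined.

Lemma FinvD (X Y : abPOG) (u : monoHom (Fobj X) (Fobj Y)) x y :
  mh_bot u (pog_add (ab_obj X) x y) = pog_add (ab_obj Y) (mh_bot u x) (mh_bot u y).
Proof. by rewrite -!m_add; exact: (mh_botD u x y). Qed.
Lemma FinvP (X Y : abPOG) (u : monoHom (Fobj X) (Fobj Y)) x :
  pog_pos (ab_obj X) x -> pog_pos (ab_obj Y) (mh_bot u x).
Proof. by move=> px; have := mh_sq u (exist _ x px) => /= ->; exact: svalP. Qed.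
Definition Finv (X Y : abPOG) (u : monoHom (Fobj X) (Fobj Y)) : abHom X Y :=
  @AbHom X Y (@PogHom _ _ (mh_bot u) (@FinvD X Y u) (@FinvP X Y u))
    (fun x y => mh_botD u x y).

Section Ess.
Variable f : monoAb.
Let A := ma_dom f.
Let B := ma_cod f.
Let ff := ma_fun f.

Lemma ff0 : ff 0 = 0.
Proof.
have H := @ma_funD f 0 0; rewrite addr0 in H.
by apply: (@addrI _ (ff 0)); rewrite addr0 -H.
Qed.
Lemma ffN a : ff (- a) = - ff a.
Proof.
apply: (@addIr _ (ff a)); rewrite -ma_funD !addNr; exact: ff0.
Qed.

Definition posB (x : B) : Prop := exists a, ff a = x.

Definition pogB : preOrdGrp.
Proof.
refine (@PreOrdGrp B +%R 0 -%R _ _ _ _ _ posB _ _ _).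
- by move=> x y z; rewrite addrA.
- exact: add0r.
- exact: addr0.
- exact: addNr.
- exact: subrr.
- by exists 0; rewrite ff0.
- by move=> x y [a <-] [b <-]; exists (a + b); exact: (@ma_funD f).
- by move=> g x [a <-]; exists a; rewrite /= (addrC g) addrK.
Defined.

Definition mB : pog_hom (pog_prod pogB pogB) pogB.
Proof.
refine (@PogHom (pog_prod pogB pogB) pogB (fun p => (p.1 : B) + p.2) _ _).
- by move=> [x1 y1] [x2 y2] /=; rewrite addrACA.
- by move=> [x y] [[a <-] [b <-]]; exists (a + b); exact: (@ma_funD f).
Defined.
Definition eB : pog_hom pog_unit pogB.
Proof.
refine (@PogHom pog_unit pogB (fun _ => (0 : B)) _ _).
- by move=> _ _ /=; rewrite addr0.
- by move=> _ _; exists 0; rewrite ff0.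
Defined.
Definition iB : pog_hom pogB pogB.
Proof.
refine (@PogHom pogB pogB (fun x : B => - x) _ _).
- by move=> x y /=; rewrite opprD.
- by move=> x [a <-]; exists (- a); rewrite ffN.
Defined.

Definition XB : abPOG.
Proof.
refine (@AbPOG pogB mB eB iB _ _ _ _).
- by move=> x y z /=; rewrite addrA.
- by move=> x /=; rewrite add0r.
- by move=> x /=; rewrite addNr.
- by move=> x y /=; rewrite addrC.
Defined.

Definition pre (x : carP XB) : A :=
  proj1_sig (boolp.constructive_indefinite_description (svalP x)).
Lemma preP (x : carP XB) : ma_fun f (pre x) = sval x.
Proof. exact: proj2_sig (boolp.constructive_indefinite_description (svalP x)). Qed.

Definition toF : monoHom (Fobj XB) f.
Proof.
refine (@MonoHom (Fobj XB) f pre (fun x : B => x) _ (fun _ _ => erefl) _).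
- move=> x y; apply: (@ma_inj f); rewrite (@ma_funD f) !preP; done.
- by move=> x /=; rewrite preP.
Defined.

Definition fromF : monoHom f (Fobj XB).
Proof.
refine (@MonoHom f (Fobj XB) (fun a => exist _ (ff a : carG XB) (ex_intro _ a erefl))
  (fun x : B => x) _ (fun _ _ => erefl) (fun _ => erefl)).
by move=> a b; apply: sig_eq; exact: (@ma_funD f).
Defined.

Lemma iso_ok : cat_iso (fobj F XB) f.
Proof.
exists toF, fromF; split.
- by apply: monoHom_eq => x //=; apply: sig_eq; exact: preP.
- by apply: monoHom_eq => a //=; apply: (@ma_inj f); exact: preP.
Qed.
End Ess.

Theorem corollary3p8 : cat_equivalent AbPreOrdGrp MonoAbCat.
Proof.
exists F; split.
- move=> a b; exists (@Finv a b).
  + by move=> h; apply: abHom_eq => x; reflexivity.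
  + by move=> u; apply: monoHom_eq => x //=; apply: sig_eq => /=; rewrite (mh_sq u).
- move=> d; exists (XB d); exact: iso_ok.
Qed.
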